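(* Let $q\geq 1$ and let $M$ be a graph of odd-girth $\ell+2$. Then $\mu^q(M)$ has odd-girth $\ell+2$.
   Context: The odd-girth of a graph is the length of a shortest odd cycle. For a graph $M$ and integer $q\geq1$, $\mu^q(M)$ is the graph obtained from $M$ (whose vertices $v$ are also written $v^0$, with the edges of $M$ kept) by adding, for each vertex $v$ of $M$, new vertices $v^1,\dots,v^q$, and for each $1\leq i\leq q$ joining $v^i$ to $w^{i-1}$ (and, for $i<q$, to $w^{i+1}$) whenever $vw$ is an edge of $M$. *)

(* Defs.v *)
From mathcomp Require Import all_boot.
Set Implicit Arguments. Unset Strict Implicit. Unset Printing Implicit Defensive.

(* A (finite simple) graph on a finType T is an edge relation e : rel T that is
   symmetric and irreflexive. *)

Definition is_graph_cycle (T : finType) (e : rel T) (c : seq T) : Prop :=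
  [/\ cycle e c, uniq c & 3 <= size c].

Definition has_odd_girth (T : finType) (e : rel T) (g : nat) : Prop :=
  (exists c, is_graph_cycle e c /\ odd (size c) /\ size c = g) /\
  (forall c, is_graph_cycle e c -> odd (size c) -> g <= size c).

(* mu^q(M): vertices v^i = (v, i) with i in {0..q}; v^0 w^0 adjacent iff vw in M;
   v^i adjacent to w^(i-1) (i >= 1) and to w^(i+1) (i < q) iff vw in M. *)
Definition mu_vertex (T : finType) (q : nat) : finType := (T * 'I_q.+1)%type.

Definition mu_edge (T : finType) (e : rel T) (q : nat) : rel (mu_vertex T q) :=
  fun x y =>
    e x.1 y.1 &&
    [|| (nat_of_ord x.2 == 0) && (nat_of_ord y.2 == 0),
        nat_of_ord x.2 == (nat_of_ord y.2).+1
      | nat_of_ord y.2 == (nat_of_ord x.2).+1].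
Arguments mu_edge : clear implicits.

(* Main.v *)
Require Import Defs.
From mathcomp Require Import all_boot zify.

Lemma dup_elem (T : eqType) (s : seq T) : ~~ uniq s -> exists x, 1 < count_mem x s.
Proof.
elim: s => [//|y s IH] /=; rewrite negb_and negbK => /orP [ys|/IH [x hx]].
  by exists y; rewrite /= eqxx add1n ltnS -has_count has_pred1.
by exists x; rewrite (leq_trans hx) // leq_addl.
Qed.

Lemma odd_walk {T : finType} (e : rel T) : irreflexive e ->
  forall n (c : seq T), size c = n -> cycle e c -> odd (size c) ->
  exists c', is_graph_cycle e c' /\ odd (size c') /\ size c' <= size c.
Proof.
move=> irr n; elim: n {-2}n (leqnn n) => [|n IH] m Hm c Hc cyc od.
  by move: Hm; rewrite leqn0 => /eqP Hm; move: od; rewrite Hc Hm.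
have [u|nu] := boolP (uniq c).
  exists c; split; last by split.
  split=> //; move: cyc od {Hc u}; case: c => [|x [|y [|z s]]] //=.
  by rewrite irr.
have [x hx] := @dup_elem _ c nu.
have xc : x \in c by rewrite -has_pred1 has_count (ltn_trans _ hx).
case: (rot_to xc) => i t ht.
have xt : x \in t.
  have Hp : perm_eq (rot i c) c by rewrite perm_rot.
  have := hx; rewrite -(permP Hp (pred1 x)) ht /= eqxx add1n ltnS.
  by rewrite -has_count has_pred1.
case/splitPr: xt ht => s2 s3 ht.
have cyc' : cycle e (x :: s2 ++ x :: s3) by rewrite -ht rot_cycle.
move: cyc'; rewrite /= rcons_cat cat_path /= => /and3P [p2 el p3].
have sz : size c = (size s2).+1 + (size s3).+1.
  by rewrite -(size_rot i c) ht /= size_cat /= addSn.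
have h3 : cycle e (x :: s3) by [].
have h2' : cycle e (x :: s2) by rewrite /= rcons_path p2 el.
have b2 : (size s2).+1 <= n.
  by move: Hm; rewrite -Hc sz; lia.
have b3 : (size s3).+1 <= n.
  by move: Hm; rewrite -Hc sz; lia.
case Ho: (odd (size s2).+1).
- have [c' [g [o l]]] := IH (size s2).+1 b2 (x :: s2) erefl h2' Ho.
  by exists c'; split=> //; split=> //; rewrite (leq_trans l) // sz leq_addr.
- have Ho3 : odd (size s3).+1.
    by move: od; rewrite sz oddD Ho.
  have [c' [g [o l]]] := IH (size s3).+1 b3 (x :: s3) erefl h3 Ho3.
  by exists c'; split=> //; split=> //; rewrite (leq_trans l) // sz leq_addl.
Qed.

Theorem lemma5 (T : finType) (e : rel T) (q l : nat) :
  symmetric e -> irreflexive e -> 1 <= q ->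
  has_odd_girth e (l + 2) ->
  has_odd_girth (mu_edge T e q) (l + 2).
Proof.
move=> sym irr q1 [[c [[cyc u s3] [o sz]]] low]; split.
  exists (map (fun v => (v, ord0)) c); rewrite size_map; split=> //; split=> //.
  + rewrite cycle_map; apply: sub_cycle cyc => x y exy.
    by rewrite /= /mu_edge /= exy.
  + by rewrite map_inj_uniq // => x y [].
  + by rewrite size_map.
clear cyc u s3 o sz c; move=> c [cyc u s3] o.
have cyc' : cycle e (map fst c).
  by rewrite cycle_map; apply: sub_cycle cyc => x y /andP [].
have o2 : odd (size (map fst c)) by rewrite size_map.
have [c' [g [o' l']]] := @odd_walk _ e irr _ _ erefl cyc' o2.
by rewrite (leq_trans (low c' g o')) // -(size_map fst c).
Qed.
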